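(* Let $\mathcal{Y}$ be a finite set of labels and let $\Omega$ be a countable set of model parameters (ensemble members) equipped with a probability distribution $p(\omega \mid \mathcal{D})$. For each $\omega \in \Omega$ and input $x$, let $p(y \mid x, \omega)$ be a probability distribution on $\mathcal{Y}$. Let $x_1, x_2$ be two inputs with corresponding label random variables $Y_1, Y_2$, and let $\delta \ge 0$ and $\epsilon \ge 0$. Suppose that $$I(Y_1; \omega \mid x_1, \mathcal{D}) > I(Y_2; \omega \mid x_2, \mathcal{D}) + \delta$$ and $$\left| H(Y_1 \mid x_1, \mathcal{D}) - H(Y_2 \mid x_2, \mathcal{D}) \right| \le \epsilon .$$ Then there exists a set $\Omega' \subseteq \Omega$ with $p(\Omega' \mid \mathcal{D}) > 0$ such that for every $\omega' \in \Omega'$, $$H(Y_1 \mid x_1, \omega') < H(Y_2 \mid x_2, \omega') - (\delta - \epsilon).$$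
   Context: The predictive distribution of the ensemble is $p(y \mid x, \mathcal{D}) = \mathbb{E}_{p(\omega \mid \mathcal{D})}[p(y \mid x, \omega)]$. $H(Y \mid x, \mathcal{D})$ denotes the Shannon entropy of $p(\cdot \mid x, \mathcal{D})$ (predictive entropy), and $H(Y \mid x, \omega)$ denotes the Shannon entropy of $p(\cdot \mid x, \omega)$ (softmax entropy of ensemble member $\omega$). The mutual information (epistemic uncertainty) is $I(Y; \omega \mid x, \mathcal{D}) = H(Y \mid x, \mathcal{D}) - \mathbb{E}_{p(\omega \mid \mathcal{D})}[H(Y \mid x, \omega)]$. *)

(* Defs.v *)
From HB Require Import structures.
From mathcomp Require Import all_boot all_order all_algebra.
From mathcomp Require Import all_classical all_reals all_analysis.
Set Implicit Arguments. Unset Strict Implicit. Unset Printing Implicit Defensive.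
Import Order.TTheory GRing.Theory Num.Theory.
Local Open Scope ring_scope.
Local Open Scope classical_set_scope.

(* Shannon entropy (natural log) of a distribution q on the finite label set;
   convention 0 * ln 0 = 0 holds automatically since the summand has factor q y. *)
Definition entropy (R : realType) (Y : finType) (q : Y -> R) : R :=
  - \sum_(y : Y) q y * ln (q y).

Definition is_distr (R : realType) (Y : finType) (q : Y -> R) : Prop :=
  (forall y, 0 <= q y) /\ \sum_(y : Y) q y = 1.

Definition is_cdistr (R : realType) (Omega : countType) (w : Omega -> R) : Prop :=
  (forall o, 0 <= w o) /\ (\esum_(o in [set: Omega]) (w o)%:E = 1%E).

Definition prob_of (R : realType) (Omega : countType) (w : Omega -> R)
  (A : set Omega) : \bar R := \esum_(o in A) (w o)%:E.

Definition predictive (R : realType) (Omega : countType) (Y : finType)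
  (w : Omega -> R) (px : Omega -> Y -> R) (y : Y) : R :=
  fine (\esum_(o in [set: Omega]) (w o * px o y)%:E).

Definition expected_entropy (R : realType) (Omega : countType) (Y : finType)
  (w : Omega -> R) (px : Omega -> Y -> R) : R :=
  fine (\esum_(o in [set: Omega]) (w o * entropy (px o))%:E).

(* I(Y; omega | x, D) = H(Y | x, D) - E_w[H(Y | x, omega)] *)
Definition mutual_info (R : realType) (Omega : countType) (Y : finType)
  (w : Omega -> R) (px : Omega -> Y -> R) : R :=
  entropy (predictive w px) - expected_entropy w px.

(* Main.v *)
Require Import Defs.
From HB Require Import structures.
From mathcomp Require Import all_boot all_order all_algebra.
From mathcomp Require Import all_classical all_reals all_analysis.
From mathcomp Require Import lra.
Set Implicit Arguments. Unset Strict Implicit.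
Import Order.TTheory GRing.Theory Num.Theory.
Local Open Scope ring_scope.
Local Open Scope classical_set_scope.

Lemma esumZ (R : realType) (T : choiceType) (a : T -> R) (k : R) :
  0 <= k ->
  \esum_(i in [set: T]) (k * a i)%:E = (k%:E * \esum_(i in [set: T]) (a i)%:E)%E.
Proof.
move=> k0; rewrite /esum -ereal_supZl //; last first.
  by apply/set0P; exists 0%E; exists set0; [exact: fsets_set0|rewrite fsbig_set0].
rewrite image_comp; congr ereal_sup; apply: eq_imagel => X [finX _] /=.
rewrite !fsumEFin // -EFinM; congr EFin; rewrite !fsbig_finite //= mulr_sumr.
by [].
Qed.

Lemma xlnx_bound (R : realType) (q : R) : 0 <= q -> q <= 1 ->
  0 <= - (q * ln q) <= 1.
Proof.
move=> q0 q1; have [->|qp] := eqVneq q 0; first by rewrite mul0r oppr0 lexx ler01.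
have qgt : 0 < q by rewrite lt_neqAle eq_sym qp.
have l0 := ln_le0 q1.
apply/andP; split; first by rewrite oppr_ge0 mulr_ge0_le0.
have qi : 0 < q^-1 by rewrite invr_gt0.
have := ln_sublinear qi; rewrite lnV ?posrE // => h.
have : q * (- ln q) <= q * q^-1 by rewrite ler_pM2l // ltW.
by rewrite mulfV // mulrN.
Qed.

Lemma entropy_bound (R : realType) (Y : finType) (q : Y -> R) : is_distr q ->
  0 <= entropy q <= \sum_(y : Y) (1 : R).
Proof.
move=> [q0 q1]; rewrite /entropy -sumrN.
have qle : forall y, q y <= 1.
  move=> y; rewrite -q1 (bigD1 y) //= lerDl; exact: sumr_ge0.
apply/andP; split.
  by apply: sumr_ge0 => y _; case/andP: (xlnx_bound (q0 y) (qle y)).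
by apply: ler_sum => y _; case/andP: (xlnx_bound (q0 y) (qle y)).
Qed.

Lemma esum_fin (R : realType) (Omega : countType) (w : Omega -> R) (h : Omega -> R) K :
  is_cdistr w -> (forall o, 0 <= h o <= K) ->
  (\esum_(o in [set: Omega]) (w o * h o)%:E =
   (fine (\esum_(o in [set: Omega]) (w o * h o)%:E))%:E).
Proof.
move=> [w0 w1] hb; rewrite fineK //.
have wh0 : forall o, (0 <= (w o * h o)%:E)%E.
  by move=> o; rewrite lee_fin mulr_ge0 //; case/andP: (hb o).
rewrite ge0_fin_numE; last exact: esum_ge0.
apply: (@le_lt_trans _ _ (Num.max K 0)%:E); last exact: ltry.
have M0 : 0 <= Num.max K 0 by rewrite le_max lexx orbT.
rewrite -[X in (_ <= X)%E]mule1 -w1 -esumZ //.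
apply: le_esum => o _; rewrite lee_fin mulrC ler_wpM2r //.
by case/andP: (hb o) => _ hK; rewrite le_max hK.
Qed.

Unset Implicit Arguments. Set Strict Implicit.

Theorem mainTheorem1 (R : realType) (Y : finType) (Omega : countType) (X : Type)
  (w : Omega -> R) (p : X -> Omega -> Y -> R) (x1 x2 : X) (delta eps : R) :
  is_cdistr w ->
  (forall x o, is_distr (p x o)) ->
  0 <= delta -> 0 <= eps ->
  mutual_info w (p x1) > mutual_info w (p x2) + delta ->
  `| entropy (predictive w (p x1)) - entropy (predictive w (p x2)) | <= eps ->
  exists Omega' : set Omega,
    (0 < prob_of w Omega')%E /\
    forall o, Omega' o ->
      entropy (p x1 o) < entropy (p x2 o) - (delta - eps).
Proof.
move=> wd pd d0 e0; rewrite /mutual_info /expected_entropy.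
set H1 := entropy (predictive _ _); set H2 := entropy (predictive _ _).
set h1 := fun o => entropy (p x1 o); set h2 := fun o => entropy (p x2 o).
have hb1 : forall o, 0 <= h1 o <= \sum_(y : Y) (1 : R) by move=> o; exact: entropy_bound.
have hb2 : forall o, 0 <= h2 o <= \sum_(y : Y) (1 : R) by move=> o; exact: entropy_bound.
have eA := esum_fin wd hb1; have eB := esum_fin wd hb2.
rewrite -/h1 -/h2 in eA eB *.
set E1 := fine _ in eA *; set E2 := fine _ in eB *.
move=> hMI /ler_normlP [hn hp].
set c := delta - eps.
have hc : E2 - E1 > c.
  rewrite /c; clearbody H1 H2 E1 E2. have t1 : 0 <= delta + eps by lra.
  have t2 : H2 - H1 <= eps by lra.
  have t3 : E2 - E1 > H1 - H2 + delta by lra.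
 lra.
clearbody c.
exists [set o | h1 o < h2 o - c]; split => //.
case: wd => [w0 w1].
rewrite lt_neqAle esum_ge0; last by move=> o _; rewrite lee_fin.
rewrite andbT; apply/negP => /eqP P0.
have wz : forall o, h1 o < h2 o - c -> w o = 0.
  move=> o ho; apply/eqP; rewrite eq_le w0 andbT -lee_fin (_ : (0:R)%:E = 0%E) // P0.
  apply: esum_ge; exists [set o]; first by split; [exact: finite_set1| move=> ? ->].
  by rewrite fsbig_set1.
pose k1 := Num.max (- c) 0; pose k2 := Num.max c 0.
have k12 : k2 - k1 = c by rewrite /k1 /k2; case: (leP c 0) => hc0; case: (leP (-c) 0) => hc1; lra.
have k10 : 0 <= k1 by rewrite /k1 le_max lexx orbT.
have k20 : 0 <= k2 by rewrite /k2 le_max lexx orbT.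
have pw : forall o, w o * h2 o + k1 * w o <= w o * h1 o + k2 * w o.
  move=> o; have [ho|ho] := ltP (h1 o) (h2 o - c).
    by rewrite (wz o ho) !(mulr0, mul0r) addr0.
  have hd : 0 <= h1 o - h2 o + c.
    move: ho; clearbody h1 h2 k1 k2 E1 E2 H1 H2; lra.
  have := mulr_ge0 (w0 o) hd.
  move=> hh; nra.
have e1 : \esum_(o in [set: Omega]) (k1 * w o)%:E = k1%:E by rewrite esumZ // w1 mule1.
have e2 : \esum_(o in [set: Omega]) (k2 * w o)%:E = k2%:E by rewrite esumZ // w1 mule1.
have L : (E2%:E + k1%:E <= E1%:E + k2%:E)%E.
  have g1 : forall o, 0 <= h1 o by move=> o; case/andP: (hb1 o).
  have g2 : forall o, 0 <= h2 o by move=> o; case/andP: (hb2 o).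
  rewrite -eA -eB -e1 -e2 -!esumD; try by move=> o _; rewrite lee_fin mulr_ge0 ?w0 ?g1 ?g2.
  by apply: le_esum => o _; rewrite -!EFinD lee_fin; exact: pw.
rewrite -!EFinD lee_fin in L.
clearbody h1 h2 k1 k2 E1 E2 H1 H2; lra.
Qed.
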